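(* Consider the decremental maintenance procedure described in the context, with parameters satisfying $\ell=\Theta(\log n)$, $p=O(1/\log n)$ and $p\delta=\Omega(c)$. Then: - after initialization, the graph $H_\ell\cup D$ has $O(mp\log n+n\delta\log n)$ edges; - over any sequence of edge deletions issued to $G$, the graph $H_\ell\cup D$ undergoes $O(n\delta\log n)$ edge insertions in total.
   Context: Let $G=(V,E)$ be an undirected graph (parallel edges allowed, no self-loops) with $n$ vertices and $m$ edges $E=\{e_1,\dots,e_m\}$, subject to edge deletions. Fix integers $c\ge1$, $\delta>c$, $\ell\ge1$ and $p\in(0,1)$, and let $s=\lceil pm\rceil$. For $C\subseteq V$, $\partial_F(C)$ is the set of edges of $F$ with exactly one endpoint in $C$. **Initialization.** 1. Maintain graphs $G_0,\dots,G_\ell$, $H_0,\dots,H_\ell$ and $D$ on vertex set $V$. 2. Set all $G_i:=G$ and $D:=(V,\emptyset)$, and $H_0:=(V,\emptyset)$. 3. For $i=1,\dots,\ell$, choose a pairwise independent random function $r_i:\{1,\dots,s\}\to\{1,\dots,m\}$, with the $r_i$ mutually independent. Set $H_i:=H_{i-1}\cup(V,\{e_{r_i(1)},\dots,e_{r_i(s)}\})$. 4. Run CleanUp$(\emptyset)$. **Deletion of $e$.** Delete $e$ from $G$ and from $D$, then run CleanUp$(\{e\})$. **CleanUp$(A)$.** For $j=0,1,\dots,\ell$ in order: 1. Delete the edges of $A$ from $G_j$ and $H_j$. 2. While some edge of $H_j$ lies in a cut of $H_j$ of size $<c$, delete that edge from $H_j$. 3. While some connected component $C$ of $H_j$ has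 $S:=\partial_{G_j}(C)$ with $0<|S|<\delta$, add the edges of $S$ to $A$ and to $D$, and delete $S$ from $G_j$. The maintained certificate is $H_\ell\cup D$. *)

(* Defs.v *)
From HB Require Import structures.
From mathcomp Require Import all_boot all_order all_algebra.
From mathcomp Require Import all_classical all_reals all_analysis.

Set Implicit Arguments.
Unset Strict Implicit.
Unset Printing Implicit Defensive.

Import Order.TTheory GRing.Theory Num.Theory.

(* The graph G has vertex set 'I_n and edges e_1..e_m represented by the
   indices 'I_m (0-based), with endpoint map [ends] (parallel edges allowed;
   absence of self-loops is a hypothesis of the theorem).  Every maintained
   graph G_j, H_j, D is represented by its edge set {set 'I_m}. *)
Section Algorithm.
Variables (n m : nat) (ends : 'I_m -> 'I_n * 'I_n) (c delta l : nat).
Local Notation V := 'I_n.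
Local Notation E := 'I_m.

Definition bnd (F : {set E}) (C : {set V}) : {set E} :=
  [set e in F | ((ends e).1 \in C) != ((ends e).2 \in C)].

Definition adj (F : {set E}) : rel V := fun x y =>
  [exists e in F, (ends e == (x, y)) || (ends e == (y, x))].

Definition is_comp (F : {set E}) (C : {set V}) : Prop :=
  exists x : V, C = [set y | connect (adj F) x y].

Definition in_small_cut (F : {set E}) (e : E) : Prop :=
  exists C : {set V}, e \in bnd F C /\ #|bnd F C| < c.

(* algorithm state: G, the G_j, the H_j (j = 0..l, indexed by nat), D *)
Record state := State {
  stG : {set E};
  stGs : nat -> {set E};
  stHs : nat -> {set E};
  stD : {set E} }.

Definition cert (st : state) : {set E} := stHs st l :|: stD st.

Definition ins (st st' : state) : nat := #|cert st' :\: cert st|.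

Definition upd (f : nat -> {set E}) (j : nat) (X : {set E}) : nat -> {set E} :=
  fun k => if k == j then X else f k.

(* CleanUp step 1 at level j *)
Definition remA (j : nat) (A : {set E}) (st : state) : state :=
  State (stG st) (upd (stGs st) j (stGs st j :\: A))
        (upd (stHs st) j (stHs st j :\: A)) (stD st).

(* CleanUp step 2, one iteration: delete e from H_j *)
Definition delH (j : nat) (e : E) (st : state) : state :=
  State (stG st) (stGs st) (upd (stHs st) j (stHs st j :\ e)) (stD st).

(* CleanUp step 3, one iteration: add S to D, delete S from G_j *)
Definition cutS (j : nat) (S : {set E}) (st : state) : state :=
  State (stG st) (upd (stGs st) j (stGs st j :\: S)) (stHs st) (stD st :|: S).

(* step 2 loop at level j, with any choice of the deleted edges;
   the nat counts insertions into the certificate *)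
Inductive prune (j : nat) : state -> state -> nat -> Prop :=
| prune_done st :
    (forall e, e \in stHs st j -> ~ in_small_cut (stHs st j) e) ->
    prune j st st 0
| prune_step st e st' k :
    e \in stHs st j -> in_small_cut (stHs st j) e ->
    prune j (delH j e st) st' k ->
    prune j st st' (ins st (delH j e st) + k).

(* step 3 loop at level j, with any choice of the components;
   carries the set A *)
Inductive separate (j : nat) : {set E} -> state -> {set E} -> state -> nat -> Prop :=
| sep_done A st :
    (forall C, is_comp (stHs st j) C ->
       ~ (0 < #|bnd (stGs st j) C| < delta)) ->
    separate j A st A st 0
| sep_step A st C A' st' k :
    is_comp (stHs st j) C ->
    0 < #|bnd (stGs st j) C| < delta ->
    separate j (A :|: bnd (stGs st j) C) (cutS j (bnd (stGs st j) C) st) A' st' k ->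
    separate j A st A' st' (ins st (cutS j (bnd (stGs st j) C) st) + k).

(* levels j, j+1, ..., l of CleanUp(A) *)
Inductive cleanup_from : nat -> {set E} -> state -> state -> nat -> Prop :=
| cu_end A st : cleanup_from l.+1 A st st 0
| cu_step j A st st2 A3 st3 st' k1 k2 k3 :
    j <= l ->
    prune j (remA j A st) st2 k1 ->
    separate j A st2 A3 st3 k2 ->
    cleanup_from j.+1 A3 st3 st' k3 ->
    cleanup_from j A st st' (ins st (remA j A st) + k1 + k2 + k3).

Definition cleanup (A : {set E}) (st st' : state) (k : nat) : Prop :=
  cleanup_from 0 A st st' k.

(* state built by initialization steps 2-3, given the functions r_i
   (r i : 'I_s -> 'I_m is r_i for i = 1..l, 0-based indices; r 0 unused):
   G_i := G, D := empty, H_0 := empty, H_i := H_{i-1} \cup {e_{r_i(k)}} *)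
Definition init_state (s : nat) (r : nat -> 'I_s -> E) : state :=
  State [set: E] (fun _ => [set: E])
    (fun i => [set e | [exists i' : 'I_l.+1, [exists k : 'I_s,
                 (0 < i' <= i) && (e == r i' k)]]])
    (finset.set0 : {set E}).

Definition del_state (e : E) (st : state) : state :=
  State (stG st :\ e) (stGs st) (stHs st) (stD st :\ e).

Inductive run : state -> seq E -> state -> nat -> Prop :=
| run_nil st : run st [::] st 0
| run_cons st e es st1 st2 k1 k2 :
    e \in stG st ->
    cleanup [set e] (del_state e st) st1 k1 ->
    run st1 es st2 k2 ->
    run st (e :: es) st2 (ins st (del_state e st) + k1 + k2).

End Algorithm.

Definition sample_size (R : realType) (p : R) (m : nat) : nat :=
  `|Num.ceil (p * m%:R)%R|%N.

(* Main.v *)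
Require Import Defs.
Set Warnings "-all".
From HB Require Import structures.
From mathcomp Require Import all_boot all_order all_algebra.
From mathcomp Require Import all_classical all_reals all_analysis.
Import Order.TTheory GRing.Theory Num.Theory.
From mathcomp Require Import zify ring lra.
Local Notation set0 := finset.set0.
Local Notation subsetP := fintype.subsetP.
Local Notation subset0 := finset.subset0.
Local Notation setSD := finset.setSD.
Set Implicit Arguments. Unset Strict Implicit. Unset Printing Implicit Defensive.

Definition laminar (T : finType) (F : {set {set T}}) : Prop :=
  forall A B, A \in F -> B \in F ->
    {subset A <= B} \/ {subset B <= A} \/ (forall y, y \in A -> y \in B -> False).

Lemma lam_bound (T : finType) N : forall (U : {set T}) (F : {set {set T}}),
  #|U| <= N -> (forall A, A \in F -> A != set0) ->
  (forall A, A \in F -> A \subset U) -> laminar F -> #|F| <= 2 * #|U|.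
Proof.
elim: N => [|N IH] U F hU hne hsub hlam.
  have U0 : U = set0 by apply/eqP; rewrite -cards_eq0; move: hU; rewrite leqn0.
  suff -> : F = set0 by rewrite cards0.
  apply/setP => A; rewrite inE; apply/negP => AF.
  move: (hne _ AF) (hsub _ AF); rewrite U0 subset0 => /negP; done.
case: (set_0Vmem U) => [U0|[x xU]].
  suff -> : F = set0 by rewrite cards0.
  apply/setP => A; rewrite inE; apply/negP => AF.
  move: (hne _ AF) (hsub _ AF); rewrite U0 subset0 => /negP; done.
pose f := fun A : {set T} => A :\ x.
pose F' := f @: [set A in F | A :\ x != set0].
have hF' : #|F'| <= 2 * #|U :\ x|.
  apply: IH.
  - by move: hU; rewrite (cardsD1 x U) xU.
  - by move=> B /imsetP [A]; rewrite inE => /andP [_ h] ->.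
  - move=> B /imsetP [A]; rewrite inE => /andP [AF _] ->.
    by apply: setSD; apply: hsub.
  - move=> B1 B2 /imsetP [A1]; rewrite inE => /andP [A1F _] ->.
    move=> /imsetP [A2]; rewrite inE => /andP [A2F _] ->.
    case: (hlam _ _ A1F A2F) => [h|[h|h]].
    + left => y; rewrite !inE => /andP [-> /h ->]; done.
    + right; left => y; rewrite !inE => /andP [-> /h ->]; done.
    + right; right => y; rewrite !inE => /andP [_ h1] /andP [_ h2]; exact: h y h1 h2.
pose F1 := [set A in F | x \notin A].
pose G2 := [set A in F | [&& x \in A, A :\ x != set0 & A :\ x \notin F]].
pose Z' := [set A in F | (x \in A) && (A :\ x \in F)].
have hsplit : F \subset (F1 :|: G2) :|: ([set [set x]] :|: Z').
  apply/subsetP => A AF; rewrite !inE AF /=.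
  case xA: (x \in A) => //=.
  case e0: (A :\ x == set0) => /=.
    suff -> : A = [set x] by rewrite eqxx.
    apply/setP => y; rewrite inE.
    move/eqP/setP: e0 => /(_ y); rewrite !inE.
    case: (eqVneq y x) => [->|] //=.
  by case: (A :\ x \in F); rewrite ?orbT.
have Dx : forall A : {set T}, x \notin A -> A :\ x = A.
  move=> A h; apply/setP => y; rewrite !inE; case: eqVneq => // ->; by rewrite (negbTE h).
have eqx : forall A B : {set T}, x \in A -> x \in B -> A :\ x = B :\ x -> A = B.
  move=> A B hA hB /setP e; apply/setP => y; move: (e y); rewrite !inE.
  case: eqVneq => [->|] //=; by rewrite hA hB.
have hinj : #|F1 :|: G2| <= #|F'|.
  rewrite -(@card_in_imset _ _ f (mem (F1 :|: G2))).
    apply: subset_leq_card; rewrite /F'.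
    apply: imsetS; apply/subsetP => A; rewrite !inE.
    case/orP => /andP [AF h]; rewrite AF /=.
      by rewrite Dx // hne.
    by case/and3P: h.
  move=> A B; rewrite !inE /f.
  case/orP => /andP [AF hA]; case/orP => /andP [BF hB].
  - by rewrite !Dx.
  - case/and3P: hB => xB _ /negP hB; rewrite (Dx A hA) => e; exfalso; apply: hB; by rewrite -e.
  - case/and3P: hA => xA _ /negP hA; rewrite (Dx B hB) => e; exfalso; apply: hA; by rewrite e.
  - case/and3P: hA => xA _ _; case/and3P: hB => xB _ _; exact: eqx.
have sub1 : forall A B : {set T}, A \in F -> B \in F -> x \in A -> x \in B ->
    A :\ x \in F -> B :\ x \in F -> {subset A <= B} -> A = B.
  move=> A B AF BF xA xB AxF BxF AB.
  case: (hlam _ _ AF BxF) => [h|[h|h]].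
  - by move: (h x xA); rewrite !inE eqxx.
  - apply/setP => y; apply/idP/idP; first exact: AB.
    move=> yB; case: (eqVneq y x) => [->|yx] //; apply: h; by rewrite !inE yx.
  - case: (set_0Vmem (A :\ x)) => [e|[y]]; first by move: (hne _ AxF); rewrite e eqxx.
    rewrite !inE => /andP [yx yA]; exfalso; apply: (h y yA); by rewrite !inE yx AB.
have hZ : #|Z'| <= 1.
  apply/card_le1_eqP => A B; rewrite !inE => /and3P [AF xA AxF] /and3P [BF xB BxF].
  case: (hlam _ _ AF BF) => [h|[h|h]].
  - by apply: esym; apply: sub1.
  - by apply: sub1.
  - by exfalso; apply: (h x).
have := subset_leq_card hsplit.
set a := #|F1 :|: G2|; set b := #|F'|; set z := #|Z'|.
rewrite cardsU cardsU1.
have := cardsD1 x U; rewrite xU /=.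
move: hF' hZ hinj.
set i1 := #|(F1 :|: G2) :&: _|; set bb := nat_of_bool _.
have : bb <= 1 by rewrite /bb; case: (_ \notin Z').
move=> hbb hF'' hZ' hinj' hU1 hF.
apply: (leq_trans hF); apply: (leq_trans (leq_subr _ _)).
apply: (leq_trans (leq_add (leq_trans hinj' hF'') (leq_add hbb hZ'))).
rewrite hU1; lia.
Qed.

Section Alg.
Variables (n m : nat) (ends : 'I_m -> 'I_n * 'I_n) (c delta l : nat).

Definition closedH (H : {set 'I_m}) (A : {set 'I_n}) :=
  forall u v, connect (adj ends H) u v -> (u \in A) = (v \in A).

Definition Inv (st : state m) (F : nat -> {set {set 'I_n}}) :=
  forall j, laminar (F j) /\ forall A, A \in F j ->
    [/\ A != set0, bnd ends (stGs st j) A = set0 & closedH (stHs st j) A].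

Definition wt (F : nat -> {set {set 'I_n}}) := \sum_(j < l.+1) #|F j|.

Lemma connect_mono (H H' : {set 'I_m}) : H' \subset H ->
  forall u v, connect (adj ends H') u v -> connect (adj ends H) u v.
Proof.
move=> sH; apply: connect_sub => x y /existsP [e /andP [eH he]].
apply: connect1; apply/existsP; exists e; by rewrite (subsetP sH e eH) he.
Qed.

Lemma closedH_mono (H H' : {set 'I_m}) A : H' \subset H -> closedH H A -> closedH H' A.
Proof. move=> sH hc u v huv; apply: hc; exact: connect_mono huv. Qed.

Lemma bnd_mono (G G' : {set 'I_m}) A : G' \subset G -> bnd ends G A = set0 -> bnd ends G' A = set0.
Proof.
move=> sG h; apply/eqP; rewrite -subset0 -h; apply/subsetP => e; rewrite !inE.
by case/andP => /(subsetP sG) -> ->.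
Qed.

Lemma Inv_shrink st st' F : (forall j, stGs st' j \subset stGs st j) ->
  (forall j, stHs st' j \subset stHs st j) -> Inv st F -> Inv st' F.
Proof.
move=> sG sH hI j; case: (hI j) => hl hA; split => // A /hA [h1 h2 h3]; split => //.
  exact: bnd_mono h2.
exact: closedH_mono h3.
Qed.

Lemma ins0 (st st' : state m) : stHs st' l \subset stHs st l -> stD st' \subset stD st ->
  ins l st st' = 0.
Proof.
move=> h1 h2; apply/eqP; rewrite cards_eq0 finset.setD_eq0 /cert.
exact: finset.setUSS.
Qed.

Lemma upd_sub (f : nat -> {set 'I_m}) j A k : upd f j (f j :\: A) k \subset f k.
Proof. rewrite /upd; case: eqP => [->|_]; [exact: finset.subsetDl | exact: fintype.subxx]. Qed.

Lemma prune_prop j st st' k : prune ends c l j st st' k ->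
  [/\ k = 0, stGs st' = stGs st, (forall i, stHs st' i \subset stHs st i) & stD st' = stD st].
Proof.
elim => {st st' k} [st _|st e st' k eH _ _ [-> h2 h3 h4]]; first by split.
rewrite /= in h2 h4; split => //.
- rewrite ins0 //= ; first by rewrite /upd; case: eqP => [->|_]; [exact: finset.subD1set|exact: fintype.subxx].
- move=> i; apply: (fintype.subset_trans (h3 i)) => /=.
  rewrite /upd; case: eqP => [->|_]; [exact: finset.subD1set|exact: fintype.subxx].
Qed.


Definition updF (F : nat -> {set {set 'I_n}}) j X : nat -> {set {set 'I_n}} :=
  fun k => if k == j then X else F k.

Lemma wt_upd (F : nat -> {set {set 'I_n}}) j (C : {set 'I_n}) : j <= l -> C \notin F j -> wt (updF F j (C |: F j)) = (wt F + 1)%N.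
Proof.
move=> jl CF; rewrite /wt.
have jl' : j < l.+1 by [].
rewrite [in LHS](bigD1 (Ordinal jl')) //= [in RHS](bigD1 (Ordinal jl')) //=.
rewrite /updF eqxx cardsU1 CF.
rewrite (eq_bigr (fun i : 'I_l.+1 => #|F i|)).
  by rewrite /= add1n addn1 addSn.
move=> i hi; have -> : (i == j :> nat) = false; last by [].
by apply/negbTE; move: hi; apply: contra => /eqP h; apply/eqP/val_inj.
Qed.

Lemma adj_sym H : symmetric (adj ends H).
Proof.
move=> x y; apply/existsP/existsP => [][e /andP [eH h]]; exists e; by rewrite eH orbC.
Qed.

Lemma cut_step st F j C : Inv st F -> is_comp ends (stHs st j) C ->
  (0 < #|bnd ends (stGs st j) C|)%N ->
  C \notin F j /\ Inv (cutS j (bnd ends (stGs st j) C) st) (updF F j (C |: F j)).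
Proof.
move=> hI [x defC] hpos.
have csym := sym_connect_sym (adj_sym (stHs st j)).
have Ccl : closedH (stHs st j) C.
  move=> u v huv; rewrite defC !inE; exact: (same_connect_r csym huv x).
have xC : x \in C by rewrite defC inE connect0.
have CF : C \notin F j.
  apply/negP => /(proj2 (hI j)) [_ h _]; by move: hpos; rewrite h cards0.
split => //.
move=> k; rewrite /updF; case: eqP => [->|nkj] /=; last first.
  case: (hI k) => hl hA; split => // A /hA [h1 h2 h3]; split => //.
  by rewrite /upd; case: eqP.
case: (hI j) => hl hA; split.
  move=> A B; rewrite !inE.
  have key : forall A, A \in F j -> {subset C <= A} \/ (forall y, y \in C -> y \in A -> False).
    move=> A' /hA [_ _ hc].
    case xA: (x \in A'); [left|right] => y; rewrite defC inE => hy.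
      by rewrite -(hc _ _ hy).
    by rewrite -(hc _ _ hy) xA.
  case/orP => [/eqP ->|AF]; case/orP => [/eqP ->|BF].
  - by left.
  - case: (key _ BF) => h; [by left|by right; right].
  - case: (key _ AF) => h; [by right; left|right; right => y yA yC; exact: h y yC yA].
  - exact: hl.
move=> A; rewrite !inE /upd eqxx; case/orP => [/eqP ->|/hA [h1 h2 h3]]; split => //.
- by apply/set0Pn; exists x.
- apply/setP => e; rewrite !inE; apply/negbTE; apply/negP => /andP [/andP [ne eG] cr].
  by move: ne; rewrite eG cr.
- apply: bnd_mono h2; exact: finset.subsetDl.
Qed.

Lemma ins_cut (st : state m) j S : (ins l st (cutS j S st) <= #|S|)%N.
Proof.
rewrite /ins /cert /=; apply: subset_leq_card; apply/subsetP => e; rewrite !inE.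
by case: (e \in S); rewrite ?orbF ?orbT // andNb.
Qed.

Lemma sep_prop j A st A' st' k : separate ends delta l j A st A' st' k -> j <= l ->
  forall F, Inv st F -> exists F', [/\ Inv st' F',
    (k + #|stD st'| + 2 * delta * wt F <= #|stD st| + 2 * delta * wt F')%N &
    stHs st' = stHs st].
Proof.
move=> hs jl; elim: hs => {A st A' st' k}.
  move=> A st _ F hI; exists F; split => //; lia.
move=> A st C A' st' k hC /andP [hpos hlt] _ IH F hI.
case: (cut_step hI hC hpos) => CF hI'.
case: (IH _ hI') => F' [hI'' hk hH]; exists F'; split => //.
have hw := wt_upd jl CF.
have hins := ins_cut st j (bnd ends (stGs st j) C).
have hD : (#|stD (cutS j (bnd ends (stGs st j) C) st)| <= #|stD st| + #|bnd ends (stGs st j) C|)%N.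
  rewrite /= cardsU; exact: leq_subr.
move: hk hins hD hlt; rewrite hw.
set a := #|bnd _ _ _|; set b := ins _ _ _; set d1 := #|stD (cutS _ _ _)|.
move=> *; nia.
Qed.


Lemma cu_prop j A st st' k : cleanup_from ends c delta l j A st st' k ->
  forall F, Inv st F -> exists F', [/\ Inv st' F',
    (k + #|stD st'| + 2 * delta * wt F <= #|stD st| + 2 * delta * wt F')%N &
    stHs st' l \subset stHs st l].
Proof.
elim => {j A st st' k}.
  move=> A st F hI; exists F; split => //; lia.
move=> j A st st2 A3 st3 st' k1 k2 k3 jl hp hs _ IH F hI.
have hI1 : Inv (remA j A st) F.
  by apply: Inv_shrink hI => i /=; apply: upd_sub.
have h0 : ins l st (remA j A st) = 0.
  by apply: ins0 => /=; [apply: upd_sub|apply: fintype.subxx].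
case: (prune_prop hp) => hk1 hG hH hD.
have hI2 : Inv st2 F.
  apply: Inv_shrink hI1 => i; [by rewrite hG; apply: fintype.subxx|exact: hH].
case: (sep_prop hs jl hI2) => F2 [hI3 hk2 hH3].
case: (IH _ hI3) => F' [hI' hk3 hH'].
exists F'; split => //.
  move: hk2 hk3; rewrite h0 hk1 hD /=.
  set x := wt F2; set y := wt F'; set z := wt F.
  move=> *; nia.
apply: (fintype.subset_trans hH'); rewrite hH3.
apply: (fintype.subset_trans (hH l)); exact: upd_sub.
Qed.

Lemma run_prop st es st' k : run ends c delta l st es st' k ->
  forall F, Inv st F -> exists F',
    [/\ Inv st' F' & (k + #|stD st'| + 2 * delta * wt F <= #|stD st| + 2 * delta * wt F')%N].
Proof.
elim => {st es st' k}.
  move=> st F hI; exists F; split => //; lia.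
move=> st e es st1 st2 k1 k2 _ hc _ IH F hI.
have hI1 : Inv (del_state e st) F by apply: Inv_shrink hI => i; apply: fintype.subxx.
have h0 : ins l st (del_state e st) = 0.
  by apply: ins0 => /=; [apply: fintype.subxx|apply: finset.subD1set].
case: (cu_prop hc hI1) => F1 [hI2 hk1 _].
case: (IH _ hI2) => F' [hI' hk2].
exists F'; split => //.
have hD : (#|stD (del_state e st)| <= #|stD st|)%N.
  by apply: subset_leq_card; apply: finset.subD1set.
move: hk1 hk2 hD; rewrite h0.
set x := wt F1; set y := wt F'; set z := wt F.
move=> *; nia.
Qed.

Lemma wt_bound F st : Inv st F -> (wt F <= l.+1 * (2 * n))%N.
Proof.
move=> hI; rewrite /wt.
have -> : (l.+1 * (2 * n) = \sum_(j < l.+1) (2 * n))%N.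
  by rewrite sum_nat_const card_ord.
apply: leq_sum => j _.
case: (hI j) => hl hA.
have := @lam_bound _ n [set: 'I_n] (F j).
rewrite cardsT card_ord; apply => //.
- by move=> A /hA [].
Qed.

End Alg.

Lemma nat_bounds n m (ends : 'I_m -> 'I_n * 'I_n) c delta l s (r : nat -> 'I_s -> 'I_m)
  (st0 : state m) k0 :
  cleanup ends c delta l set0 (init_state l r) st0 k0 ->
  (#|cert l st0| <= l.+1 * s + 2 * delta * (l.+1 * (2 * n)))%N /\
  (forall dels st k, run ends c delta l st0 dels st k ->
     (k <= 2 * delta * (l.+1 * (2 * n)))%N).
Proof.
move=> hc.
pose F0 := fun _ : nat => (set0 : {set {set 'I_n}}).
have hI0 : Inv ends (init_state l r) F0.
  by move=> j; split => [A B|A]; rewrite inE.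
have w0 : wt l F0 = 0.
  by rewrite /wt big1 // => i _; rewrite cards0.
case: (cu_prop hc hI0) => F1 [hI1 hk hH].
move: hk; rewrite w0 /= cards0 muln0 addn0 => hk.
have hw1 := @wt_bound _ _ _ l _ _ hI1.
have hD : (#|stD st0| <= 2 * delta * (l.+1 * (2 * n)))%N.
  apply: (leq_trans _ (leq_mul (leqnn (2 * delta)) hw1)); apply: (leq_trans _ hk); exact: leq_addl.
split.
  rewrite /cert cardsU; apply: (leq_trans (leq_subr _ _)).
  apply: leq_add => //.
  apply: (leq_trans (subset_leq_card hH)) => /=.
  have -> : (l.+1 * s = #|[set: 'I_l.+1 * 'I_s]|)%N by rewrite cardsT card_prod !card_ord.
  apply: (leq_trans _ (leq_imset_card (fun p : 'I_l.+1 * 'I_s => r (val p.1) p.2) _)).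
  apply: subset_leq_card; apply/subsetP => e; rewrite inE => /existsP [i /existsP [k /andP [_ /eqP ->]]].
  by apply/imsetP; exists (i, k); rewrite ?inE.
move=> dels st k hr.
case: (run_prop hr hI1) => F2 [hI2 hk2].
have hw2 := @wt_bound _ _ _ l _ _ hI2.
have := leq_mul (leqnn (2 * delta)) hw2.
move: hk hk2 hD.
set a := wt l F1; set b := wt l F2; set X := (l.+1 * (2 * n))%N.
set pa := 2 * delta * a; set pb := 2 * delta * b; set pX := 2 * delta * X.
move=> h1 h2 h3 h4; apply: (leq_trans _ h4).
have h5 := leq_trans h2 (leq_add h3 (leqnn pb)).
move: h1 h5; set D0 := #|stD st0|; set D1 := #|stD st|; lia.
Qed.

Local Open Scope ring_scope.

Lemma sample_le (R : realType) (p : R) m : 0 < p -> (sample_size p m)%:R <= p * m%:R + 1.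
Proof.
move=> hp; rewrite /sample_size natr_absz ger0_norm; last first.
  by rewrite ceil_ge0; apply: (lt_le_trans (y := 0)); rewrite ?ltrN10 // mulr_ge0 // ltW.
have := ceilB1_lt (p * m%:R); rewrite intrB => h; apply: ltW; lra.
Qed.

Unset Implicit Arguments.
Theorem lemma7 (R : realType) (al1 al2 ap ad : R) :
  0 < al1 -> 0 < al2 -> 0 < ap -> 0 < ad ->
  exists K : R, 0 < K /\
  forall (n m : nat) (ends : 'I_m -> 'I_n * 'I_n) (c delta l : nat) (p : R),
    (forall e, (ends e).1 != (ends e).2) ->
    (1 <= c)%N -> (c < delta)%N -> (1 <= l)%N -> 0 < p < 1 ->
    (* l = Theta(log n) *)
    al1 * ln n%:R <= l%:R <= al2 * ln n%:R ->
    (* p = O(1 / log n) *)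
    p * ln n%:R <= ap ->
    (* p delta = Omega(c) *)
    c%:R <= ad * (p * delta%:R) ->
    forall (r : nat -> 'I_(sample_size p m) -> 'I_m) (st0 : state m) (k0 : nat),
      cleanup ends c delta l (finset.set0 : {set 'I_m}) (init_state l r) st0 k0 ->
      (#|cert l st0|%:R <= K * (m%:R * p * ln n%:R + n%:R * delta%:R * ln n%:R))
      /\ (forall (dels : seq 'I_m) (st : state m) (k : nat),
            run ends c delta l st0 dels st k ->
            k%:R <= K * (n%:R * delta%:R * ln n%:R)).
Proof.
move=> ha1 ha2 hap had; exists (10 * al2); split; first lra.
move=> n m ends c delta l p _ hc hcd hl /andP [hp0 hp1] /andP [hl1 hl2] _ _ r st0 k0 hcl.
have [hcert hrun] := nat_bounds hcl.
set L := ln n%:R in hl1 hl2 *.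
have hlR : 1 <= l%:R :> R by rewrite ler1n.
have hL : 0 < L.
  have h : 0 < al2 * L by lra.
  by move: h; rewrite pmulr_rgt0.
have hn : (0 < n)%N.
  rewrite lt0n; apply/eqP => n0; move: hL; by rewrite /L n0 ln0 // ltxx.
have hnR : 1 <= n%:R :> R by rewrite ler1n.
have hdR : 1 <= delta%:R :> R by rewrite ler1n; lia.
have hs := sample_le m hp0.
set s := sample_size p m in hcert hs *.
have hnd : 1 <= n%:R * delta%:R :> R by have := ler_pM ler01 ler01 hnR hdR; rewrite mulr1.
have hpm : 0 <= p * m%:R by apply: mulr_ge0; [apply: ltW|].
have hl2' : (l.+1)%:R <= 2 * (al2 * L) :> R.
  by rewrite -natr1; lra.
split.
  apply: (le_trans (y := ((l.+1)%:R * (s%:R + 4 * (n%:R * delta%:R))))).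
    move: hcert; rewrite -(ler_nat R) => h; apply: (le_trans h).
    rewrite !natrD !natrM; lra.
  apply: (le_trans (y := (2 * (al2 * L)) * (p * m%:R + 5 * (n%:R * delta%:R)))).
    apply: ler_pM => //; lra.
  have h1 : 0 <= al2 * L by apply: mulr_ge0; apply: ltW.
  have h2 : p * m%:R + 5 * (n%:R * delta%:R) <= 5 * (m%:R * p + n%:R * delta%:R) by lra.
  have -> : 10 * al2 * (m%:R * p * L + n%:R * delta%:R * L) =
            (2 * (al2 * L)) * (5 * (m%:R * p + n%:R * delta%:R)) by ring.
  apply: ler_pM => //; lra.
move=> dels st k hr.
have := hrun _ _ _ hr; rewrite -(ler_nat R) => h; apply: (le_trans h).
rewrite !natrM.
have h1 : 0 <= n%:R * delta%:R :> R by lra.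
have h2 : 0 <= al2 * L by apply: mulr_ge0; apply: ltW.
have h3 := ler_pM (x1 := 4 * (n%:R * delta%:R)) _ _ (le_refl _) hl2'.
have h4 : 0 <= (al2 * L) * (n%:R * delta%:R) by apply: mulr_ge0.
have h5 : 0 <= (l.+1)%:R :> R by [].
have := h3 _ h5.
move=> h6; have := h6 ltac:(lra) => h7.
nra.
Qed.
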